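(* Let $X,Y$ be positive words and suppose $a_{ts}X\doteq a_{rq}Y$ (with $n\ge t>s\ge1$, $n\ge r>q\ge1$). Then: (I) If $t=r$ and $s=q$, then $X\doteq Y$. (II) (three distinct indices) (i) If $t=r$ and $q<s$, then $X\doteq a_{sq}Z$, $Y\doteq a_{ts}Z$ for some positive word $Z$; (ii) if $t=r$ and $s<q$, then $X\doteq a_{tq}Z$, $Y\doteq a_{qs}Z$; (iii) if $t=q$, then $X\doteq a_{rs}Z$, $Y\doteq a_{ts}Z$; (iv) if $s=r$, then $X\doteq a_{sq}Z$, $Y\doteq a_{tq}Z$; (v) if $s=q$ and $r<t$, then $X\doteq a_{tr}Z$, $Y\doteq a_{ts}Z$; (vi) if $s=q$ and $t<r$, then $X\doteq a_{rs}Z$, $Y\doteq a_{rt}Z$; in each case for some positive word $Z$. (III) If the four indices are distinct and $(t-r)(t-q)(s-r)(s-q)>0$, then $X\doteq a_{rq}Z$ and $Y\doteq a_{ts}Z$ for some positive word $Z$. (IV) If the four indices are distinct: (i) if $q<s<r<t$, then $X\doteq a_{tr}a_{sq}Z$ and $Y\doteq a_{tq}a_{rs}Z$ for some positive word $Z$; (ii) if $s<q<t<r$, then $X\doteq a_{tq}a_{rs}Z$ and $Y\doteq a_{rt}a_{qs}Z$ for some positive word $Z$.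
   Context: $B_n$ is the $n$-string braid group with band generators $a_{ts}$ ($n\ge t>s\ge1$), where $a_{ts}=(\sigma_{t-1}\cdots\sigma_{s+1})\sigma_s(\sigma_{s+1}^{-1}\cdots\sigma_{t-1}^{-1})$. The band relations are: (R1) $a_{ts}a_{rq}=a_{rq}a_{ts}$ if $(t-r)(t-q)(s-r)(s-q)>0$; (R2) $a_{ts}a_{sr}=a_{tr}a_{ts}=a_{sr}a_{tr}$ for $n\ge t>s>r\ge1$. A positive word is a word in positive powers of the $a_{ts}$. Two positive words $X,Y$ are positively equivalent, $X\doteq Y$, if one can be transformed into the other by a finite sequence of single direct applications of relations (R1), (R2) to subwords. *)

(* Defs.v *)
From mathcomp Require Import all_boot all_order all_algebra.
From Stdlib Require Import Relation_Operators.
Set Implicit Arguments. Unset Strict Implicit. Unset Printing Implicit Defensive.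
Import GRing.Theory Num.Theory.

(* a letter (t, s) stands for the band generator a_{ts} *)
Definition band := (nat * nat)%type.
Definition a (t s : nat) : band := (t, s).

Definition valid_band (n : nat) (x : band) : bool :=
  [&& 1 <= x.2, x.2 < x.1 & x.1 <= n]%N.

Definition pos_word (n : nat) (w : seq band) : bool := all (valid_band n) w.

Inductive band_rel (n : nat) : seq band -> seq band -> Prop :=
| R1 t s r q :
    valid_band n (a t s) -> valid_band n (a r q) ->
    (0 < ((t%:Z - r%:Z) * (t%:Z - q%:Z) * (s%:Z - r%:Z) * (s%:Z - q%:Z))%R)%R ->
    band_rel n [:: a t s; a r q] [:: a r q; a t s]
| R2a t s r : (n >= t)%N -> (t > s)%N -> (s > r)%N -> (r >= 1)%N ->
    band_rel n [:: a t s; a s r] [:: a t r; a t s]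
| R2b t s r : (n >= t)%N -> (t > s)%N -> (s > r)%N -> (r >= 1)%N ->
    band_rel n [:: a t r; a t s] [:: a s r; a t r]
| R2c t s r : (n >= t)%N -> (t > s)%N -> (s > r)%N -> (r >= 1)%N ->
    band_rel n [:: a t s; a s r] [:: a s r; a t r].

Inductive pos_step (n : nat) : seq band -> seq band -> Prop :=
| pos_step_intro U V A B :
    (band_rel n A B \/ band_rel n B A) ->
    pos_step n (U ++ A ++ V) (U ++ B ++ V).

Definition pos_equiv (n : nat) : seq band -> seq band -> Prop :=
  clos_refl_trans (seq band) (pos_step n).

(* Main.v *)
Require Import Defs.
From mathcomp Require Import all_boot all_order all_algebra.
From Stdlib Require Import Relation_Operators.
From mathcomp Require Import zify.
Set Implicit Arguments. Unset Strict Implicit. Unset Printing Implicit Defensive.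


Definition cf (x y : band) : seq band :=
  let t := x.1 in let s := x.2 in let r := y.1 in let q := y.2 in
  if (t == r) && (s == q) then [::]
  else if t == r then (if q < s then [:: (s, q)] else [:: (t, q)])
  else if t == q then [:: (r, s)]
  else if s == r then [:: (s, q)]
  else if s == q then (if r < t then [:: (t, r)] else [:: (r, s)])
  else if [&& q < s, s < r & r < t] then [:: (t, r); (s, q)]
  else if [&& s < q, q < t & t < r] then [:: (t, q); (r, s)]
  else [:: (r, q)].

Definition combool4 (t s r q : nat) : bool :=
  [&& t != r, t != q, s != r, s != q &
      ~~ ((t < r) (+) (t < q) (+) (s < r) (+) (s < q))].
Definition combool (x y : band) := combool4 x.1 x.2 y.1 y.2.

Fixpoint crev (fuel : nat) (u v : seq band) : option (seq band * seq band) :=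
  match fuel with 0 => None | S f =>
  match u, v with
  | [::], _ => Some (v, [::])
  | _, [::] => Some ([::], u)
  | x :: u', y :: v' =>
    match crev f u' (cf x y) with
    | Some (a1, w1) =>
      match crev f v' (cf y x ++ w1) with
      | Some (b2, c2) => Some (a1 ++ c2, b2)
      | None => None end
    | None => None end
  end end.

Definition R2cond (k t s r : nat) : bool := [&& t <= k, s < t, r < s & 1 <= r].

Definition nb2 (k : nat) (x y : band) : seq (seq band) :=
  (if [&& valid_band k x, valid_band k y & combool x y] then [:: [:: y; x]] else [::]) ++
  (if (x.2 == y.1) && R2cond k x.1 x.2 y.2
   then [:: [:: (x.1, y.2); x]; [:: y; (x.1, y.2)]] else [::]) ++
  (if (x.1 == y.1) && R2cond k x.1 y.2 x.2
   then [:: [:: y; (y.2, x.2)]; [:: (y.2, x.2); x]] else [::]) ++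
  (if (x.2 == y.2) && R2cond k y.1 x.1 x.2
   then [:: [:: y; (y.1, x.1)]; [:: (y.1, x.1); x]] else [::]).

Fixpoint nbrs (k : nat) (w : seq band) : seq (seq band) :=
  match w with
  | x :: ((y :: w2) as w1) =>
      [seq B ++ w2 | B <- nb2 k x y] ++ [seq x :: v | v <- nbrs k w1]
  | _ => [::]
  end.

Fixpoint bfs (k fuel : nat) (front vis : seq (seq band)) : seq (seq band) :=
  match fuel with 0 => vis | S f =>
    let nw := undup [seq v <- flatten (map (nbrs k) front) | v \notin vis] in
    if nw is [::] then vis else bfs k f nw (nw ++ vis) end.

Definition equivb (k : nat) (u v : seq band) : bool := v \in bfs k 30 [:: u] [:: u].

Definition letters (k : nat) : seq band :=
  flatten [seq [seq (t, s) | s <- iota 1 t.-1] | t <- iota 1 k].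

Definition RF := 20.

Definition cube1 (k : nat) (x z y : band) : bool :=
  match crev RF (cf z x) (cf z y) with
  | Some (al, be) =>
    let L := cf x z ++ al in let R := cf y z ++ be in
    match crev RF (cf x y) L with
    | Some (g, [::]) => [&& pos_word k g, equivb k L (cf x y ++ g) & equivb k R (cf y x ++ g)]
    | _ => false end
  | None => false end.

Definition cube_ok (k : nat) : bool :=
  all (fun x => all (fun z => all (fun y => cube1 k x z y) (letters k)) (letters k)) (letters k).



Section Basic.
Variable n : nat.
Local Notation "u ≡ v" := (pos_equiv n u v) (at level 70).

Lemma pe_refl u : u ≡ u. Proof. exact: rt_refl. Qed.
Lemma pe_trans u v w : u ≡ v -> v ≡ w -> u ≡ w. Proof. exact: rt_trans. Qed.

Lemma step_sym u v : pos_step n u v -> pos_step n v u.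
Proof. by case=> U V A B H; constructor; case: H; auto. Qed.

Lemma pe_sym u v : u ≡ v -> v ≡ u.
Proof.
elim=> [x y H| x| x y z _ H1 _ H2]; first by apply: rt_step; exact: step_sym.
  exact: rt_refl.
exact: rt_trans H2 H1.
Qed.

Lemma step_appl w u v : pos_step n u v -> pos_step n (w ++ u) (w ++ v).
Proof.
case=> U V A B H.
have -> : w ++ U ++ A ++ V = (w ++ U) ++ A ++ V by rewrite !catA.
have -> : w ++ U ++ B ++ V = (w ++ U) ++ B ++ V by rewrite !catA.
by constructor.
Qed.

Lemma step_appr w u v : pos_step n u v -> pos_step n (u ++ w) (v ++ w).
Proof.
case=> U V A B H.
have -> : (U ++ A ++ V) ++ w = U ++ A ++ (V ++ w) by rewrite !catA.
have -> : (U ++ B ++ V) ++ w = U ++ B ++ (V ++ w) by rewrite !catA.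
by constructor.
Qed.

Lemma pe_appl w u v : u ≡ v -> (w ++ u) ≡ (w ++ v).
Proof.
elim=> [x y H| x| x y z _ H1 _ H2]; last exact: rt_trans H1 H2.
  by apply: rt_step; exact: step_appl.
exact: rt_refl.
Qed.

Lemma pe_appr w u v : u ≡ v -> (u ++ w) ≡ (v ++ w).
Proof.
elim=> [x y H| x| x y z _ H1 _ H2]; last exact: rt_trans H1 H2.
  by apply: rt_step; exact: step_appr.
exact: rt_refl.
Qed.

Lemma pe_cons x u v : u ≡ v -> (x :: u) ≡ (x :: v).
Proof. exact: (pe_appl [:: x]). Qed.

Lemma band_rel_size A B : band_rel n A B -> size A = size B.
Proof. by case. Qed.

Lemma band_rel_valid A B : band_rel n A B -> pos_word n A /\ pos_word n B.
Proof.
case=> [t s r q H1 H2 _| t s r| t s r| t s r];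
  rewrite /pos_word /= ?H1 ?H2 //= /valid_band /=; lia.
Qed.

Lemma step_size u v : pos_step n u v -> size u = size v.
Proof.
by case=> U V A B [] /band_rel_size; rewrite !size_cat => ->.
Qed.

Lemma step_valid u v : pos_step n u v -> pos_word n u -> pos_word n v.
Proof.
case=> U V A B H; rewrite /pos_word !all_cat => /and3P[-> _ ->]; rewrite andbT /=.
by case: H => /band_rel_valid [].
Qed.

Lemma pe_size u v : u ≡ v -> size u = size v.
Proof. elim=> [x y /step_size //| //| x y z _ -> _ ->] //. Qed.

Lemma pe_valid u v : u ≡ v -> pos_word n u -> pos_word n v.
Proof. elim=> [x y /step_valid //| //| x y z _ H1 _ H2 /H1 /H2] //. Qed.

End Basic.

Module PE.
Import Order.TTheory GRing.Theory Num.Theory.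
Lemma sgz_sub (a b : nat) :
  (sgz (a%:Z - b%:Z) = if (a < b)%N then -1 else if a == b then 0 else 1)%R.
Proof.
case: ltngtP => h.
- by apply: ltr0_sgz; rewrite subr_lt0 ltz_nat.
- by apply: gtr0_sgz; rewrite subr_gt0 ltz_nat.
- by rewrite h subrr.
Qed.

Lemma prodE (t s r q : nat) :
  (0 < ((t%:Z - r%:Z) * (t%:Z - q%:Z) * (s%:Z - r%:Z) * (s%:Z - q%:Z)))%R
  = combool4 t s r q.
Proof.
rewrite -sgz_gt0 !sgzM !sgz_sub /combool4.
by case: (ltngtP t r); case: (ltngtP t q); case: (ltngtP s r); case: (ltngtP s q).
Qed.


End PE.
Notation prodE := PE.prodE.

Ltac cft := rewrite /cf /=; repeat (case: ifP => /= ?); try done; try lia.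

Lemma cf_xx x : cf x x = [::].
Proof. by rewrite /cf !eqxx. Qed.

Lemma cf_comm t s r q : s < t -> q < r -> combool4 t s r q ->
  cf (t, s) (r, q) = [:: (r, q)].
Proof.
rewrite /combool4 => h1 h2 /and5P[/negbTE e1 /negbTE e2 /negbTE e3 /negbTE e4 p].
rewrite /cf /= e1 e2 e3 e4 /=.
case: ifP => [/and3P[a1 a2 a3]|_].
  have [b1 b2 b3 b4] : [/\ (t<r) = false, (t<q)=false, (s<r) = true & (s<q)=false] by split; lia.
  by move: p; rewrite b1 b2 b3 b4.
case: ifP => [/and3P[a1 a2 a3]|_] //.
have [b1 b2 b3 b4] : [/\ (t<r) = true, (t<q)=false, (s<r) = true & (s<q)=true] by split; lia.
by move: p; rewrite b1 b2 b3 b4.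
Qed.

Lemma combool4_sym t s r q : s < t -> q < r -> combool4 t s r q -> combool4 r q t s.
Proof.
rewrite /combool4 => h1 h2 /and5P[e1 e2 e3 e4 p].
apply/and5P; split; try by rewrite eq_sym.
have E : forall a b : nat, a != b -> (b < a) = ~~ (a < b).
  by move=> a b; rewrite neq_ltn; case: ltngtP.
rewrite (E t r) // (E s r) // (E t q) // (E s q) //; move: p; case: (t < r); case: (t < q); case: (s < r); by case: (s < q).
Qed.

Lemma rel_cf n A B : band_rel n A B -> exists x a z b,
  [/\ A = [:: x; a], B = [:: z; b], cf x z = [:: a] & cf z x = [:: b]].
Proof.
case=> [t s r q H1 H2 H| t s r h1 h2 h3 h4| t s r h1 h2 h3 h4| t s r h1 h2 h3 h4].
- exists (t, s), (r, q), (r, q), (t, s); split => //.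
    move: H1 H2 H; rewrite /valid_band /= prodE => /and3P[? ? ?] /and3P[? ? ?] H.
    exact: cf_comm.
  move: H1 H2 H; rewrite /valid_band /= prodE => /and3P[? ? ?] /and3P[? ? ?] H.
  by apply: cf_comm => //; apply: combool4_sym.
- by exists (t, s), (s, r), (t, r), (t, s); split => //; cft.
- by exists (t, r), (t, s), (s, r), (t, r); split => //; cft.
- by exists (t, s), (s, r), (s, r), (t, r); split => //; cft.
Qed.


Lemma nb2_sound k x y B : B \in nb2 k x y ->
  band_rel k [:: x; y] B \/ band_rel k B [:: x; y].
Proof.
case: x => t s; case: y => r q.
rewrite /nb2 /= !mem_cat => /or4P[].
- case: ifP => [/and3P[h1 h2 h3]|_] //.
  rewrite mem_seq1 => /eqP ->; left; have := (@R1 k t s r q h1 h2).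
  rewrite prodE => /(_ h3) HH; exact HH.
- case: ifP => [/andP[/eqP e /and4P[h1 h2 h3 h4]]|_] //.
  subst r; rewrite !inE => /orP[/eqP ->|/eqP ->]; left.
    exact: R2a.
  exact: R2c.
- case: ifP => [/andP[/eqP e /and4P[h1 h2 h3 h4]]|_] //.
  subst r; rewrite !inE => /orP[/eqP ->|/eqP ->].
    by right; apply: R2a.
  by left; apply: R2b.
- case: ifP => [/andP[/eqP e /and4P[h1 h2 h3 h4]]|_] //.
  subst q; rewrite !inE => /orP[/eqP ->|/eqP ->].
    by right; apply: R2b.
  by right; apply: R2c.
Qed.

Lemma nbrs_sound k w v : v \in nbrs k w -> pos_step k w v.
Proof.
elim: w v => [|x w IH] v //=.
case: w IH => [|y w2] IH //.
rewrite mem_cat => /orP[/mapP[B HB ->]|/mapP[v' Hv' ->]].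
  have := pos_step_intro [::] w2 (nb2_sound HB).
  by rewrite /=.
exact: (step_appl [:: x] (IH _ Hv')).
Qed.

Lemma bfs_sound k u fuel front vis :
  (forall w, w \in front -> pos_equiv k u w) ->
  (forall w, w \in vis -> pos_equiv k u w) ->
  forall w, w \in bfs k fuel front vis -> pos_equiv k u w.
Proof.
elim: fuel front vis => [|f IH] front vis Hf Hv //=.
set nw := undup _.
have Hn : forall w, w \in nw -> pos_equiv k u w.
  move=> w; rewrite mem_undup mem_filter => /andP[_ /flattenP[l /mapP[w0 H0 ->] Hw]].
  apply: pe_trans (Hf _ H0) _; apply: rt_step; exact: nbrs_sound.
case: nw Hn => [|a l] Hn //.
apply: IH => // w; rewrite mem_cat => /orP[]; [exact: Hn| exact: Hv].
Qed.

Lemma equivb_sound k u v : equivb k u v -> pos_equiv k u v.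
Proof.
apply: bfs_sound => w; rewrite inE => /eqP ->; exact: pe_refl.
Qed.


Definition gmap (phi : nat -> nat) (x : band) : band := (phi x.1, phi x.2).

Section Map.
Variable phi : nat -> nat.
Hypothesis Hm : forall i, phi i < phi i.+1.

Lemma phi_le a b : (phi a <= phi b) = (a <= b).
Proof. apply: leq_mono; apply: homo_ltn => //; exact: ltn_trans. Qed.

Lemma phi_lt a b : (phi a < phi b) = (a < b).
Proof. by rewrite !ltnNge phi_le. Qed.

Lemma phi_eq a b : (phi a == phi b) = (a == b).
Proof. by rewrite !eqn_leq !phi_le. Qed.

Lemma cf_map x y : cf (gmap phi x) (gmap phi y) = map (gmap phi) (cf x y).
Proof.
case: x y => t s [r q]; rewrite /cf /gmap /= !phi_eq !phi_lt.
by repeat case: ifP.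
Qed.

Lemma combool_map x y : combool (gmap phi x) (gmap phi y) = combool x y.
Proof. by case: x y => t s [r q]; rewrite /combool /combool4 /gmap /= !phi_eq !phi_lt. Qed.

Lemma crev_map fuel u v : crev fuel (map (gmap phi) u) (map (gmap phi) v) =
  omap (fun p => (map (gmap phi) p.1, map (gmap phi) p.2)) (crev fuel u v).
Proof.
elim: fuel u v => [|f IH] [|x u] [|y v] //=.
rewrite cf_map IH; case: (crev f u (cf x y)) => [[a1 w1]|] //=.
rewrite cf_map -map_cat IH; case: (crev f v (cf y x ++ w1)) => [[b2 c2]|] //=.
by rewrite map_cat.
Qed.

Variables (k n : nat).
Hypothesis Hkn : phi k <= n.

Lemma valid_map x : valid_band k x -> valid_band n (gmap phi x).
Proof.
case: x => t s; rewrite /valid_band /gmap /= => /and3P[h1 h2 h3].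
have h0 : phi 0 < phi s by rewrite phi_lt; lia.
rewrite phi_lt h2 /=; apply/andP; split; first lia.
by apply: leq_trans Hkn; rewrite phi_le.
Qed.

Lemma word_map w : pos_word k w -> pos_word n (map (gmap phi) w).
Proof. by rewrite /pos_word all_map => /allP H; apply/allP => x /H /valid_map. Qed.

Lemma rel_map A B : band_rel k A B -> band_rel n (map (gmap phi) A) (map (gmap phi) B).
Proof.
case=> [t s r q H1 H2 H| t s r h1 h2 h3 h4| t s r h1 h2 h3 h4| t s r h1 h2 h3 h4].
- have V1 := valid_map H1; have V2 := valid_map H2.
  have := @R1 n (phi t) (phi s) (phi r) (phi q) V1 V2.
  rewrite !prodE; move: H; rewrite !prodE => H.
  have := combool_map (t, s) (r, q); rewrite /combool /= => ->.
  by move/(_ H).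
- have h0 : phi 0 < phi r by rewrite phi_lt; lia.
  have ht : phi t <= n by apply: leq_trans Hkn; rewrite phi_le.
  apply: (@R2a n (phi t) (phi s) (phi r)); rewrite ?phi_lt //; lia.
- have h0 : phi 0 < phi r by rewrite phi_lt; lia.
  have ht : phi t <= n by apply: leq_trans Hkn; rewrite phi_le.
  apply: (@R2b n (phi t) (phi s) (phi r)); rewrite ?phi_lt //; lia.
- have h0 : phi 0 < phi r by rewrite phi_lt; lia.
  have ht : phi t <= n by apply: leq_trans Hkn; rewrite phi_le.
  apply: (@R2c n (phi t) (phi s) (phi r)); rewrite ?phi_lt //; lia.
Qed.

Lemma pe_map u v : pos_equiv k u v -> pos_equiv n (map (gmap phi) u) (map (gmap phi) v).
Proof.
elim=> [x y H| x| x y z _ H1 _ H2]; last exact: pe_trans H1 H2; last exact: pe_refl.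
apply: rt_step; case: H => U V A B H; rewrite !map_cat; constructor.
by case: H => /rel_map; auto.
Qed.

End Map.


Lemma embed n (S : seq nat) : all (fun i => 0 < i <= n) S ->
  exists k (phi : nat -> nat), [/\ (forall i, phi i < phi i.+1), phi k <= n,
    k <= size S & forall i, i \in S -> exists2 j, 0 < j <= k & phi j = i].
Proof.
move=> /allP HS.
set T := sort leq (undup S).
have memT i : (i \in T) = (i \in S) by rewrite mem_sort mem_undup.
have T0 : all (ltn 0) T by apply/allP => i; rewrite memT => /HS /andP[].
have sT : sorted ltn T.
  by rewrite ltn_sorted_uniq_leq sort_uniq undup_uniq sort_sorted //; exact: leq_total.
have pT : path ltn 0 T by rewrite path_min_sorted.
set k := size T.
pose S0 := 0 :: T.
pose lv := nth 0 S0 k.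
exists k, (fun j => if j <= k then nth 0 S0 j else lv + (j - k)); split.
- move=> i; cbv beta; case: (leqP i.+1 k) => h.
    rewrite (ltnW h); move/pathP: pT => /(_ 0 i h) //.
  case: (leqP i k) => h2.
    have e : i = k by lia.
    rewrite e /lv; lia.
  lia.
- rewrite leqnn /lv /S0; have : k < size S0 by [].
  move/(mem_nth 0); rewrite inE => /orP[/eqP ->|] //.
  by rewrite memT => /HS /andP[].
- by rewrite /k /T size_sort size_undup.
- move=> i Hi; have Hi0 : 0 < i by case/andP: (HS _ Hi).
  have HiT : i \in T by rewrite memT.
  have eI : index i S0 = (index i T).+1.
    by rewrite /S0 /= eq_sym (negbTE (lt0n_neq0 Hi0)).
  have lI : index i T < k by rewrite index_mem.
  exists (index i S0); first by rewrite eI; lia.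
  have -> : index i S0 <= k by rewrite eI.
  by rewrite nth_index // inE HiT orbT.
Qed.


Lemma letters_mem k x : valid_band k x -> x \in letters k.
Proof.
case: x => t s; rewrite /valid_band /= => /and3P[h1 h2 h3].
apply/flattenP; exists [seq (t, s0) | s0 <- iota 1 t.-1].
  apply/mapP; exists t => //; rewrite mem_iota; lia.
apply/mapP; exists s => //; rewrite mem_iota; lia.
Qed.

Lemma lift_letter n k phi (S : seq nat) x :
  (forall i, phi i < phi i.+1) ->
  (forall i, i \in S -> exists2 j, 0 < j <= k & phi j = i) ->
  valid_band n x -> x.1 \in S -> x.2 \in S ->
  exists x', valid_band k x' /\ gmap phi x' = x.
Proof.
move=> Hm HS; case: x => t s /=; rewrite /valid_band /= => /and3P[h1 h2 h3] it iS.
case: (HS _ it) => j1 /andP[a1 b1] e1; case: (HS _ iS) => j2 /andP[a2 b2] e2.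
exists (j1, j2); split; last by rewrite /gmap /= e1 e2.
rewrite /valid_band /= a2 b1 andbT /=.
by rewrite -(phi_lt Hm) e1 e2.
Qed.

Definition cfv_ok (k : nat) : bool :=
  all (fun x => all (fun y => pos_word k (cf x y)) (letters k)) (letters k).

Lemma cfv_small k : k <= 4 -> cfv_ok k.
Proof.
move=> hk; have : all cfv_ok (iota 0 5) by vm_compute.
move/allP; apply; rewrite mem_iota; lia.
Qed.

Lemma cube_small k : k <= 6 -> cube_ok k.
Proof.
move=> hk; have : all cube_ok (iota 0 7) by vm_compute.
move/allP; apply; rewrite mem_iota; lia.
Qed.

Lemma cf_valid n x y : valid_band n x -> valid_band n y -> pos_word n (cf x y).
Proof.
move=> vx vy.
have HS : all (fun i => 0 < i <= n) [:: x.1; x.2; y.1; y.2].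
  by move: vx vy; case: x => t s; case: y => r q; rewrite /valid_band /=; lia.
case: (embed HS) => k [phi [Hm Hk Hsz Hj]].
have [x' [vx' ex]] := lift_letter Hm Hj vx (mem_head _ _) (ltac:(by rewrite !inE eqxx ?orbT)).
have [y' [vy' ey]] := lift_letter Hm Hj vy (ltac:(by rewrite !inE eqxx ?orbT)) (ltac:(by rewrite !inE eqxx ?orbT)).
rewrite -ex -ey (cf_map Hm); apply: (word_map Hm Hk).
have := cfv_small Hsz; rewrite /cfv_ok => /allP /(_ _ (letters_mem vx')) /allP.
exact: (fun H => H _ (letters_mem vy')).
Qed.

Lemma crev_valid n fuel u v a b : pos_word n u -> pos_word n v ->
  crev fuel u v = Some (a, b) -> pos_word n a /\ pos_word n b.
Proof.
elim: fuel u v a b => [|f IH] [|x u] [|y v] a b //=.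
- by move=> _ H [<- <-].
- by move=> _ H [<- <-].
- by move=> H _ [<- <-].
move=> /andP[vx vu] /andP[vy vv].
case E1: (crev f u (cf x y)) => [[a1 w1]|] //.
case E2: (crev f v (cf y x ++ w1)) => [[b2 c2]|] // [<- <-].
have [va1 vw1] := IH _ _ _ _ vu (cf_valid vx vy) E1.
have vw : pos_word n (cf y x ++ w1) by rewrite /pos_word all_cat; apply/andP; split; [exact: cf_valid|exact: vw1].
have [vb2 vc2] := IH _ _ _ _ vv vw E2.
by split => //; rewrite /pos_word all_cat; apply/andP; split.
Qed.

Lemma cube_big n x z y : valid_band n x -> valid_band n z -> valid_band n y ->
  exists al be g, [/\ crev RF (cf z x) (cf z y) = Some (al, be), pos_word n g,
    pos_equiv n (cf x z ++ al) (cf x y ++ g) &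
    pos_equiv n (cf y z ++ be) (cf y x ++ g)].
Proof.
move=> vx vz vy.
have HS : all (fun i => 0 < i <= n) [:: x.1; x.2; z.1; z.2; y.1; y.2].
  by move: vx vz vy; case: x => t s; case: z => r q; case: y => u v; rewrite /valid_band /=; lia.
case: (embed HS) => k [phi [Hm Hk Hsz Hj]].
have [x' [vx' ex]] := lift_letter Hm Hj vx (ltac:(by rewrite !inE eqxx ?orbT)) (ltac:(by rewrite !inE eqxx ?orbT)).
have [z' [vz' ez]] := lift_letter Hm Hj vz (ltac:(by rewrite !inE eqxx ?orbT)) (ltac:(by rewrite !inE eqxx ?orbT)).
have [y' [vy' ey]] := lift_letter Hm Hj vy (ltac:(by rewrite !inE eqxx ?orbT)) (ltac:(by rewrite !inE eqxx ?orbT)).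
have := cube_small Hsz; rewrite /cube_ok.
move=> /allP /(_ _ (letters_mem vx')) /allP /(_ _ (letters_mem vz')) /allP /(_ _ (letters_mem vy')).
rewrite /cube1.
case E1: (crev RF (cf z' x') (cf z' y')) => [[al be]|] //.
case E2: (crev RF (cf x' y') (cf x' z' ++ al)) => [[g [|? ?]]|] //.
move=> /and3P[vg q1 q2].
exists (map (gmap phi) al), (map (gmap phi) be), (map (gmap phi) g).
rewrite -ex -ez -ey !(cf_map Hm) (crev_map Hm) E1; split => //.
- exact: (word_map Hm Hk).
- by rewrite -!map_cat; apply: (pe_map Hm Hk); apply: equivb_sound.
- by rewrite -!map_cat; apply: (pe_map Hm Hk); apply: equivb_sound.
Qed.


Definition P n m := forall x y X Y, pos_word n (x :: X) -> size X = m ->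
  pos_equiv n (x :: X) (y :: Y) ->
  exists Z, [/\ pos_word n Z, pos_equiv n X (cf x y ++ Z) & pos_equiv n Y (cf y x ++ Z)].

Lemma pw_cat n u v : pos_word n (u ++ v) = pos_word n u && pos_word n v.
Proof. by rewrite /pos_word all_cat. Qed.

Lemma crev_ok n m : (forall j, j < m -> P n j) -> forall fuel u v a b,
  crev fuel u v = Some (a, b) -> forall A B, pos_word n (u ++ A) -> pos_word n (v ++ B) ->
  size (u ++ A) <= m -> pos_equiv n (u ++ A) (v ++ B) ->
  exists C, [/\ pos_word n C, pos_equiv n A (a ++ C) & pos_equiv n B (b ++ C)].
Proof.
move=> HP; elim=> [|f IH] [|x u] [|y v] a b //; intros E; simpl in E.
- case: E => <- <- A B vA vB _ H.
  by exists B; split => //; exact: pe_refl.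
- case: E => <- <- A B vA vB _ H.
  exists B; split => //; last exact: pe_refl.
  by move: vB; rewrite pw_cat => /andP[].
- case: E => <- <- A B vA vB _ H.
  exists A; split => //; first by move: vA; rewrite pw_cat => /andP[].
    exact: pe_refl.
  exact: pe_sym H.
move: E; case E1: (crev f u (cf x y)) => [[a1 w1]|] //.
case E2: (crev f v (cf y x ++ w1)) => [[b2 c2]|] // [<- <-].
move=> A B vxA vyB sz H.
have [W [vW H1 H2]] := HP (size (u ++ A)) sz x y _ _ vxA erefl H.
have vx : valid_band n x by case/andP: vxA.
have vy : valid_band n y by case/andP: vyB.
have vuA : pos_word n (u ++ A) by case/andP: vxA.
have vvB : pos_word n (v ++ B) by case/andP: vyB.
have vcW : pos_word n (cf x y ++ W) by rewrite pw_cat; apply/andP; split => //; exact: cf_valid.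
have [C1 [vC1 K1 K2]] := IH _ _ _ _ E1 A W vuA vcW (ltnW sz) H1.
have H3 : pos_equiv n (v ++ B) ((cf y x ++ w1) ++ C1).
  by rewrite -catA; apply: pe_trans H2 _; apply: pe_appl.
have sz2 : size (v ++ B) <= m.
  by move: (pe_size H) sz => /= [<-]; lia.
have vr : pos_word n ((cf y x ++ w1) ++ C1) by exact: pe_valid H3 vvB.
have [C2 [vC2 L1 L2]] := IH _ _ _ _ E2 B C1 vvB vr sz2 H3.
exists C2; split => //.
by rewrite -catA; apply: pe_trans K1 _; apply: pe_appl.
Qed.

Lemma Pall n m : P n m.
Proof.
elim/ltn_ind: m => m HP.
suff chain : forall w1 w2, pos_equiv n w1 w2 -> pos_word n w1 -> size w1 = m.+1 ->
  forall x X y Y, w1 = x :: X -> w2 = y :: Y ->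
  exists Z, [/\ pos_word n Z, pos_equiv n X (cf x y ++ Z) & pos_equiv n Y (cf y x ++ Z)].
  by move=> x y X Y vw sz H; apply: (chain _ _ H vw) => //=; rewrite sz.
move=> w1 w2; elim=> {w1 w2} [w1 w2 Hs| w| w1 w2 w3 H12 IH12 H23 IH23].
- case: Hs => U V A B HAB vw _ x X y Y.
  have [[x' [a' [z' [b' [eA eB c1 c2]]]]] | [x' [a' [z' [b' [eA eB c1 c2]]]]]] :
    (exists x a z b, [/\ A = [:: x; a], B = [:: z; b], cf x z = [:: a] & cf z x = [:: b]]) \/
    (exists x a z b, [/\ B = [:: x; a], A = [:: z; b], cf x z = [:: a] & cf z x = [:: b]]).
  + by case: HAB => /rel_cf; auto.
  + subst A B; case: U vw => [|u U] vw /= [<- <-] [<- <-].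
      exists V; split; [by move: vw => /= /and3P[]| |];
        by rewrite ?c1 ?c2; exact: pe_refl.
    exists (U ++ [:: z'; b'] ++ V); rewrite cf_xx; split.
    * apply: (step_valid (pos_step_intro U V HAB)); by case/andP: vw.
    * by apply: rt_step; exact: (pos_step_intro U V HAB).
    * exact: pe_refl.
  + subst A B; case: U vw => [|u U] vw /= [<- <-] [<- <-].
      exists V; split; [by move: vw => /= /and3P[]| |];
        by rewrite ?c1 ?c2; exact: pe_refl.
    exists (U ++ [:: x'; a'] ++ V); rewrite cf_xx; split.
    * apply: (step_valid (pos_step_intro U V HAB)); by case/andP: vw.
    * by apply: rt_step; exact: (pos_step_intro U V HAB).
    * exact: pe_refl.
- move=> vw _ x X y Y e1 e2; subst w; case: e2 => <- <-.
  exists X; rewrite cf_xx; split; try exact: pe_refl.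
  by case/andP: vw.
- move=> vw1 sz1 x X y Y e1 e3.
  have vw2 := pe_valid H12 vw1.
  have sz2 : size w2 = m.+1 by rewrite -(pe_size H12).
  case: w2 H12 IH12 H23 IH23 vw2 sz2 => [|z V] H12 IH12 H23 IH23 vw2 sz2 //.
  have [Z1 [vZ1 K1 K2]] := IH12 vw1 sz1 x X z V e1 erefl.
  have [Z2 [vZ2 L1 L2]] := IH23 vw2 sz2 z V y Y erefl e3.
  have vw3 := pe_valid H23 vw2.
  have vx : valid_band n x by move: vw1; rewrite e1 => /andP[].
  have vz : valid_band n z by case/andP: vw2.
  have vy : valid_band n y by move: vw3; rewrite e3 => /andP[].
  have [al [be [g [Ec vg M1 M2]]]] := cube_big vx vz vy.
  have Hv : pos_equiv n (cf z x ++ Z1) (cf z y ++ Z2) by apply: pe_trans (pe_sym K2) L1.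
  have szV : size (cf z x ++ Z1) <= m.
    by rewrite -(pe_size K2); move: sz2 => /= [->].
  have p1 : pos_word n (cf z x ++ Z1) by rewrite pw_cat; apply/andP; split => //; exact: cf_valid.
  have p2 : pos_word n (cf z y ++ Z2) by rewrite pw_cat; apply/andP; split => //; exact: cf_valid.
  have [W [vW N1 N2]] := crev_ok HP Ec p1 p2 szV Hv.
  exists (g ++ W); split; first by rewrite pw_cat; apply/andP.
  + apply: pe_trans K1 _; rewrite catA; apply: pe_trans (pe_appr W M1).
    by rewrite -catA; apply: pe_appl.
  + apply: pe_trans L2 _; rewrite catA; apply: pe_trans (pe_appr W M2).
    by rewrite -catA; apply: pe_appl.
Qed.


Ltac cft2 := rewrite /cf /a /=; repeat (case: ifP => /= ?); try done; try lia.

Theorem theorem2p3 (n : nat) (X Y : seq band) (t s r q : nat) :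
  pos_word n X -> pos_word n Y ->
  valid_band n (a t s) -> valid_band n (a r q) ->
  pos_equiv n (a t s :: X) (a r q :: Y) ->
  (* (I) *)
  ((t = r /\ s = q) -> pos_equiv n X Y) /\
  (* (II)(i) *)
  ((t = r /\ (q < s)%N) -> exists Z, pos_word n Z /\
      pos_equiv n X (a s q :: Z) /\ pos_equiv n Y (a t s :: Z)) /\
  (* (II)(ii) *)
  ((t = r /\ (s < q)%N) -> exists Z, pos_word n Z /\
      pos_equiv n X (a t q :: Z) /\ pos_equiv n Y (a q s :: Z)) /\
  (* (II)(iii) *)
  (t = q -> exists Z, pos_word n Z /\
      pos_equiv n X (a r s :: Z) /\ pos_equiv n Y (a t s :: Z)) /\
  (* (II)(iv) *)
  (s = r -> exists Z, pos_word n Z /\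
      pos_equiv n X (a s q :: Z) /\ pos_equiv n Y (a t q :: Z)) /\
  (* (II)(v) *)
  ((s = q /\ (r < t)%N) -> exists Z, pos_word n Z /\
      pos_equiv n X (a t r :: Z) /\ pos_equiv n Y (a t s :: Z)) /\
  (* (II)(vi) *)
  ((s = q /\ (t < r)%N) -> exists Z, pos_word n Z /\
      pos_equiv n X (a r s :: Z) /\ pos_equiv n Y (a r t :: Z)) /\
  (* (III) *)
  (uniq [:: t; s; r; q] ->
   (0 < ((t%:Z - r%:Z) * (t%:Z - q%:Z) * (s%:Z - r%:Z) * (s%:Z - q%:Z))%R)%R ->
   exists Z, pos_word n Z /\
      pos_equiv n X (a r q :: Z) /\ pos_equiv n Y (a t s :: Z)) /\
  (* (IV)(i) *)
  (uniq [:: t; s; r; q] -> [&& q < s, s < r & r < t]%N ->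
   exists Z, pos_word n Z /\
      pos_equiv n X (a t r :: a s q :: Z) /\ pos_equiv n Y (a t q :: a r s :: Z)) /\
  (* (IV)(ii) *)
  (uniq [:: t; s; r; q] -> [&& s < q, q < t & t < r]%N ->
   exists Z, pos_word n Z /\
      pos_equiv n X (a t q :: a r s :: Z) /\ pos_equiv n Y (a r t :: a q s :: Z)).
Proof.
move=> vX vY v1 v2 H.
have vtX : pos_word n (a t s :: X) by apply/andP.
have [Z [vZ HX HY]] := Pall vtX erefl H.
have [h1 h2 h3] : [/\ 0 < s, s < t & t <= n] by move: v1; rewrite /valid_band /= => /and3P[].
have [g1 g2 g3] : [/\ 0 < q, q < r & r <= n] by move: v2; rewrite /valid_band /= => /and3P[].
split; [|split; [|split; [|split; [|split; [|split; [|split; [|split; [|split]]]]]]]].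
- move=> [e1 e2]; subst r q; move: HX HY; rewrite !cf_xx /= => HX HY.
  exact: pe_trans HX (pe_sym HY).
- move=> [e1 e2]; subst r.
  have E1 : cf (a t s) (a t q) = [:: a s q] by cft2.
  have E2 : cf (a t q) (a t s) = [:: a t s] by cft2.
  by exists Z; move: HX HY; rewrite E1 E2.
- move=> [e1 e2]; subst r.
  have E1 : cf (a t s) (a t q) = [:: a t q] by cft2.
  have E2 : cf (a t q) (a t s) = [:: a q s] by cft2.
  by exists Z; move: HX HY; rewrite E1 E2.
- move=> e1; subst q.
  have E1 : cf (a t s) (a r t) = [:: a r s] by cft2.
  have E2 : cf (a r t) (a t s) = [:: a t s] by cft2.
  by exists Z; move: HX HY; rewrite E1 E2.
- move=> e1; subst r.
  have E1 : cf (a t s) (a s q) = [:: a s q] by cft2.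
  have E2 : cf (a s q) (a t s) = [:: a t q] by cft2.
  by exists Z; move: HX HY; rewrite E1 E2.
- move=> [e1 e2]; subst q.
  have E1 : cf (a t s) (a r s) = [:: a t r] by cft2.
  have E2 : cf (a r s) (a t s) = [:: a t s] by cft2.
  by exists Z; move: HX HY; rewrite E1 E2.
- move=> [e1 e2]; subst q.
  have E1 : cf (a t s) (a r s) = [:: a r s] by cft2.
  have E2 : cf (a r s) (a t s) = [:: a r t] by cft2.
  by exists Z; move: HX HY; rewrite E1 E2.
- move=> _; rewrite prodE => hc.
  have E1 : cf (a t s) (a r q) = [:: a r q] by exact: cf_comm.
  have E2 : cf (a r q) (a t s) = [:: a t s] by apply: cf_comm => //; exact: combool4_sym.
  by exists Z; move: HX HY; rewrite E1 E2.
- move=> _ /and3P[k1 k2 k3].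
  have E1 : cf (a t s) (a r q) = [:: a t r; a s q] by cft2.
  have E2 : cf (a r q) (a t s) = [:: a r s; a t q] by cft2.
  exists Z; move: HX HY; rewrite E1 E2 => HX HY; split => //; split => //.
  apply: pe_trans HY _; apply: rt_step.
  have := @pos_step_intro n [::] Z [:: a r s; a t q] [:: a t q; a r s]; apply; left.
  have w1 : valid_band n (a r s) by rewrite /valid_band /=; lia.
  have w2 : valid_band n (a t q) by rewrite /valid_band /=; lia.
  have := @R1 n r s t q w1 w2; apply; rewrite prodE /combool4.
  have [-> -> -> ->] : [/\ (r < t) = true, (r < q) = false, (s < t) = true & (s < q) = false].
    by split; lia.
  apply/and5P; split => //; apply/eqP; lia.
- move=> _ /and3P[k1 k2 k3].
  have E1 : cf (a t s) (a r q) = [:: a t q; a r s] by cft2.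
  have E2 : cf (a r q) (a t s) = [:: a r t; a q s] by cft2.
  by exists Z; move: HX HY; rewrite E1 E2.
Qed.
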